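(* Let $n\geqslant1$, $a,b>0$, $\sigma\in(0,1)\cup(1,+\infty)$, and let $\widehat v(t,\xi)$ be the partial Fourier transform of the solution of $v_{tt}-a\Delta v+b(-\Delta)^\sigma v+v_t=0$, $v(0)=v_0$, $v_t(0)=v_1$, i.e. $\widehat v=\frac{\lambda_+e^{\lambda_-t}-\lambda_-e^{\lambda_+t}}{\lambda_+-\lambda_-}\widehat v_0+\frac{e^{\lambda_+t}-e^{\lambda_-t}}{\lambda_+-\lambda_-}\widehat v_1$ with $\lambda_\pm=\frac12\big(-1\pm\sqrt{1-4(a|\xi|^2+b|\xi|^{2\sigma})}\big)$. There exist $\varepsilon_0>0$ sufficiently small and constants $c,C>0$ such that for all $t\geqslant0$ and all $\xi$ with $|\xi|\leqslant\varepsilon_0$: if $\sigma\in(0,1)$, $$|\widehat v|\leqslant C e^{-c|\xi|^{2\sigma}t}(|\widehat v_0|+|\widehat v_1|),\quad \big|\widehat v-e^{-b|\xi|^{2\sigma}t}(\widehat v_0+\widehat v_1)\big|\leqslant C\big(e^{-ct}+|\xi|^{\min\{2-2\sigma,2\sigma\}}e^{-c|\xi|^{2\sigma}t}\big)(|\widehat v_0|+|\widehat v_1|);$$ if $\sigma\in(1,+\infty)$, $$|\widehat v|\leqslant C e^{-c|\xi|^{2}t}(|\widehat v_0|+|\widehat v_1|),\quad \big|\widehat v-e^{-a|\xi|^{2}t}(\widehat v_0+\widehat v_1)\big|\leqslant C\big(e^{-ct}+|\xi|^{\min\{2,2\sigma-2\}}e^{-c|\xi|^{2}t}\big)(|\widehat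 v_0|+|\widehat v_1|).$$
   Context: $(-\Delta)^\sigma$ is the Fourier multiplier with symbol $|\xi|^{2\sigma}$. *)

(* Defs.v *)
From mathcomp Require Import all_boot all_order all_algebra.
From mathcomp Require Import all_classical all_reals all_analysis.
From mathcomp Require Export complex.
Set Implicit Arguments. Unset Strict Implicit. Unset Printing Implicit Defensive.
Import Order.TTheory GRing.Theory Num.Theory.
Local Open Scope ring_scope.

Section Defs.
Variable R : realType.

Definition enorm (n : nat) (xi : 'rV[R]_n) : R :=
  Num.sqrt (\sum_(i < n) xi ord0 i ^+ 2).

Definition cmod (z : R[i]) : R := Normc.normc z.

Definition expC (z : R[i]) : R[i] :=
  ((real_complex R (expR (complex.Re z))) * Complex (cos (complex.Im z)) (sin (complex.Im z)))%R.

(* symbol of -a Delta + b (-Delta)^sigma at |xi| = r : a r^2 + b r^(2 sigma) *)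
Definition symb (a b sigma r : R) : R := a * r ^+ 2 + b * powR r (2 * sigma).

Definition lam_plus (a b sigma r : R) : R[i] :=
  ((- 1 + sqrtc (real_complex R (1 - 4 * symb a b sigma r))) / 2%:R)%R.
Definition lam_minus (a b sigma r : R) : R[i] :=
  ((- 1 - sqrtc (real_complex R (1 - 4 * symb a b sigma r))) / 2%:R)%R.

(* partial Fourier transform of the solution at (t, xi), given
   v0h = \hat v_0(xi), v1h = \hat v_1(xi) *)
Definition vhat (n : nat) (a b sigma t : R) (xi : 'rV[R]_n) (v0h v1h : R[i])
  : R[i] :=
  let r := enorm xi in
  let lp := lam_plus a b sigma r in
  let lm := lam_minus a b sigma r in
  (((lp * expC (lm * real_complex R t) - lm * expC (lp * real_complex R t)) / (lp - lm)) * v0h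
   + ((expC (lp * real_complex R t) - expC (lm * real_complex R t)) / (lp - lm)) * v1h)%R.

End Defs.

(* Main.v *)
Require Import Defs.
From mathcomp Require Import all_boot all_order all_algebra.
From mathcomp Require Import all_classical all_reals all_analysis.
From mathcomp Require Import complex.
From mathcomp Require Import ring lra.
Import Order.TTheory GRing.Theory Num.Theory.
Local Open Scope ring_scope.

Lemma fin (R : realType) (X Y E F G q s K rho Kb Yd : R) :
  0 < Y -> Y <= X -> X <= E -> E <= F -> Y <= G -> 0 <= K -> 0 <= Kb ->
  0 <= rho * F -> 0 <= F -> 0 <= G ->
  E - X <= Kb * (rho * F) ->
  0 <= Yd -> Yd <= 2 * Y ->
  0 <= q * (Y - X) -> q * (Y - X) <= 4 * (s * X) ->
  0 <= - q * X -> - q * X <= 4 * (s * X) ->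
  s * X <= K * (rho * F) -> s * X <= 3/16 * X ->
  0 <= K * F -> 0 <= Kb * F -> 0 <= Kb * (rho * F) -> 0 <= K * G -> 0 <= Kb * G -> 0 <= K * (rho * F) ->
  [/\ `|X + q * (Y - X)| <= (8 + 8 * K + Kb) * F, `|X - 2 * q * X - Yd| <= (8 + 8 * K + Kb) * F,
      `|X + q * (Y - X) - E| <= (8 + 8 * K + Kb) * (G + rho * F) &
      `|X - 2 * q * X - Yd - E| <= (8 + 8 * K + Kb) * (G + rho * F)].
Proof.
move=> *; rewrite !mulrDl !mulrDr.
split; rewrite ler_norml; apply/andP; split; lra.
Qed.

Lemma key (R : realType) (be c K g s rho t : R) :
  0 < be -> 0 < c -> c <= be / 2 -> c <= 1/2 -> 0 <= K -> 0 <= g -> 0 <= rho ->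
  0 <= t -> 0 <= s -> s <= 3/16 -> be * g <= s ->
  s - be * g + 2 * s ^+ 2 <= K * rho * g -> s <= K * rho ->
  let d := Num.sqrt (1 - 4 * s) in
  let p := (-1 + d) / 2 in let m := (-1 - d) / 2 in
  let A := (p * expR (m * t) - m * expR (p * t)) / (p - m) in
  let B := (expR (p * t) - expR (m * t)) / (p - m) in
  let E := expR (- be * g * t) in
  let C0 := 8 + 8 * K + 2 * K / be in
  [/\ `|A| <= C0 * expR (- c * g * t), `|B| <= C0 * expR (- c * g * t),
      `|A - E| <= C0 * (expR (- c * t) + rho * expR (- c * g * t)) &
      `|B - E| <= C0 * (expR (- c * t) + rho * expR (- c * g * t))].
Proof.
move=> hbe hc hcb hc2 hK hg hrho ht hs hs3 hbg hh hsK d p m A B E C0.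
rewrite /A /B; clear A B.
have h14 : 0 <= 1 - 4 * s by lra.
have hd2 : d ^+ 2 = 1 - 4 * s by rewrite sqr_sqrtr.
have hd0 : 0 <= d by rewrite sqrtr_ge0.
have hdl : 1/2 <= d by nra.
have hdu : d <= 1 - 2 * s by nra.
have hdu2 : 1 - 4 * s <= d by nra.
have hps : - 2 * s ^+ 2 <= p + s.
  have e : (1 - 2 * s - d) * (1 - 2 * s + d) = 4 * s ^+ 2.
    have -> : (1 - 2 * s - d) * (1 - 2 * s + d) = (1 - 2 * s) ^+ 2 - d ^+ 2 by ring.
    by rewrite hd2; ring.
  rewrite /p; nra.
have hpm : p - m = d by rewrite /p /m; field.
have hd0' : d != 0 by apply/eqP; lra.
set X := expR (p * t). set Y := expR (m * t). set F := expR (- c * g * t).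
set G := expR (- c * t).
have hY0 : 0 < Y := expR_gt0 _.
have hF0 : 0 < F := expR_gt0 _.
have hG0 : 0 < G := expR_gt0 _.
have hgt : 0 <= g * t by nra.
have hYX : Y <= X by rewrite ler_expR /p /m; nra.
have hXE : X <= E by rewrite ler_expR /p; nra.
have hEF : E <= F by rewrite ler_expR; nra.
have hYG : Y <= G by rewrite ler_expR /m; nra.
have hEgt : E * (g * t) <= 2 / be * F.
  set w := be * g * t / 2.
  have hw : w <= expR w by have := expR_ge1Dx w; lra.
  have hEw : E = expR (- w) * expR (- w) by rewrite -expRD /E /w; congr expR; field.
  have hww : w * expR (- w) <= 1.
    have := ler_wpM2r (ltW (expR_gt0 (- w))) hw.
    by rewrite -expRD subrr expR0.
  have hFw : expR (- w) <= F by rewrite ler_expR /w; nra.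
  have -> : g * t = 2 / be * w by rewrite /w; field; lra.
  have h0 : 0 <= expR (- w) := ltW (expR_gt0 _).
  have h1 : 0 <= 2 / be by apply: divr_ge0; lra.
  rewrite hEw.
  have : expR (- w) * (w * expR (- w)) <= expR (- w) * 1 by apply: ler_wpM2l.
  move=> h2.
  have : 2 / be * (expR (- w) * (w * expR (- w))) <= 2 / be * F.
    apply: ler_wpM2l => //; lra.
  move=> h3; apply: le_trans h3; rewrite le_eqVlt; apply/orP; left; apply/eqP; ring.
have hEX : E - X <= K * rho * (2 / be * F).
  have hz : X = E * expR (p * t + be * g * t).
    by rewrite -expRD /X; congr expR; ring.
  have := expR_ge1Dx (p * t + be * g * t).
  have hE0 : 0 < E := expR_gt0 _.
  move=> h1.
  have h2 : E - X <= E * (- (p * t + be * g * t)) by rewrite hz; nra.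
  have h3 : - (p * t + be * g * t) <= K * rho * (g * t) by nra.
  have h4 : E * (- (p * t + be * g * t)) <= E * (K * rho * (g * t)) by apply: ler_wpM2l; lra.
  have hKr : 0 <= K * rho by nra.
  have h5 : K * rho * (E * (g * t)) <= K * rho * (2 / be * F) by apply: ler_wpM2l.
  nra.
have hp2 : - 2 * s <= p <= 0 by rewrite /p; apply/andP; split; lra.
set q := p / d.
have hqd : q * d = p by rewrite /q; field.
have hq0 : q <= 0 by rewrite /q; apply: mulr_le0_ge0; [by case/andP: hp2|rewrite invr_ge0].
have hqd2 : q * (d - 1/2) <= 0 by apply: mulr_le0_ge0; lra.
have hq4 : - 4 * s <= q by move/andP: hp2 => [? ?]; lra.
have hA : (p * Y - m * X) / (p - m) = X + q * (Y - X) by rewrite hpm /q /m /p; field; lra.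
have hB : (X - Y) / (p - m) = X - 2 * q * X - Y / d by rewrite hpm /q /p; field; lra.
have hYd : 0 <= Y / d <= 2 * Y.
  apply/andP; split; first by apply: divr_ge0; lra.
  rewrite ler_pdivrMr; nra.
have hqYX : 0 <= q * (Y - X) <= 4 * s * X by apply/andP; split; nra.
have hqX : 0 <= - q * X <= 4 * s * X by apply/andP; split; nra.
have hsX : s * X <= K * rho * F by nra.
have hbe1 : 0 <= 2 * K / be by apply: divr_ge0; [apply: mulr_ge0|apply: ltW].
have hC : 2 / be * K = 2 * K / be by rewrite mulrC mulrA [K * 2]mulrC.
have hrF : 0 <= rho * F by apply: mulr_ge0 => //; apply: ltW.
have hEX0 : 0 <= E - X by lra.
have hKrho : K * rho * (2 / be * F) = (2 * K / be) * (rho * F) by rewrite -hC; ring.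
have hsX3 : s * X <= 3/16 * X by apply: ler_wpM2r; lra.
have hKF : 0 <= K * F by apply: mulr_ge0 => //; apply: ltW.
have hKbF : 0 <= 2 * K / be * F by apply: mulr_ge0 => //; apply: ltW.
have hKbrF : 0 <= 2 * K / be * (rho * F) by apply: mulr_ge0.
have hKG : 0 <= K * G by apply: mulr_ge0 => //; apply: ltW.
have hKbG : 0 <= 2 * K / be * G by apply: mulr_ge0 => //; apply: ltW.
have hKrF : 0 <= K * (rho * F) by apply: mulr_ge0.
move/andP: hYd => [hYd1 hYd2]. move/andP: hqYX => [hq1 hq2]. move/andP: hqX => [hq3 hq4'].
rewrite /C0 hA hB.
apply: (@fin R X Y E F G q s K rho (2 * K / be) (Y / d)) => //; try lra.
Qed.

Section P.
Variable R : realType.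

Lemma cmod_rc (x : R) (z : R[i]) : cmod ((real_complex R x) * z) = `|x| * cmod z.
Proof.
rewrite /cmod Normc.normcM; congr (_ * _).
by rewrite /= expr0n /= addr0 sqrtr_sqr.
Qed.

Lemma cmodD (z w : R[i]) : cmod (z + w) <= cmod z + cmod w.
Proof. exact: le_normcD. Qed.

Lemma cmod_ge0 (z : R[i]) : 0 <= cmod z.
Proof. by case: z => x y; rewrite /cmod /= sqrtr_ge0. Qed.

Lemma cmod_lin (x y M : R) (z w : R[i]) : `|x| <= M -> `|y| <= M ->
  cmod (real_complex R x * z + real_complex R y * w) <= M * (cmod z + cmod w).
Proof.
move=> hx hy; apply: le_trans (cmodD _ _) _.
by rewrite !cmod_rc mulrDr; apply: lerD; apply: ler_wpM2r => //; exact: cmod_ge0.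
Qed.

Lemma expC_real (x t : R) : expC (real_complex R x * real_complex R t) = real_complex R (expR (x * t)).
Proof.
rewrite -rmorphM /expC /= cos0 sin0.
have -> : Complex (1 : R) 0 = 1 by [].
by rewrite mulr1.
Qed.

Lemma lam_real (s : R) : 0 <= 1 - 4 * s ->
  sqrtc (real_complex R (1 - 4 * s)) = real_complex R (Num.sqrt (1 - 4 * s)).
Proof. by move=> h; rewrite sqrtc_sqrtr ?ler0c. Qed.

Lemma vhat_real (n : nat) (a b sigma t : R) (xi : 'rV[R]_n) (v0 v1 : R[i]) :
  let s := symb a b sigma (enorm xi) in
  0 <= 1 - 4 * s ->
  let d := Num.sqrt (1 - 4 * s) in
  let p := (-1 + d) / 2 in let m := (-1 - d) / 2 in
  vhat a b sigma t xi v0 v1 =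
  real_complex R ((p * expR (m * t) - m * expR (p * t)) / (p - m)) * v0 +
  real_complex R ((expR (p * t) - expR (m * t)) / (p - m)) * v1.
Proof.
move=> s hs d p m.
have hp : lam_plus a b sigma (enorm xi) = real_complex R p.
  rewrite /lam_plus. rewrite -/s lam_real // /p -/d. rewrite rmorphM rmorphD rmorphN1 fmorphV /=.
  by rewrite rmorph_nat.
have hm : lam_minus a b sigma (enorm xi) = real_complex R m.
  rewrite /lam_minus -/s lam_real // /m -/d rmorphM rmorphB rmorphN1 fmorphV /=.
  by rewrite rmorph_nat.
rewrite /vhat /= hp hm !expC_real.
clearbody p m d.
by rewrite !rmorphM !rmorphB !fmorphV !rmorphM !rmorphB.
Qed.

Lemma conclude (n : nat) (a b sigma t : R) (xi : 'rV[R]_n) (v0 v1 : R[i])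
  (be c K g rho : R) :
  let s := symb a b sigma (enorm xi) in
  0 < be -> 0 < c -> c <= be / 2 -> c <= 1/2 -> 0 <= K -> 0 <= g -> 0 <= rho ->
  0 <= t -> 0 <= s -> s <= 3/16 -> be * g <= s ->
  s - be * g + 2 * s ^+ 2 <= K * rho * g -> s <= K * rho ->
  let C := 8 + 8 * K + 2 * K / be in
  let v := vhat a b sigma t xi v0 v1 in
  let D := cmod v0 + cmod v1 in
  (cmod v <= C * expR (- c * g * t) * D) /\ (cmod (v - real_complex R (expR (- be * g * t)) * (v0 + v1))
    <= C * (expR (- c * t) + rho * expR (- c * g * t)) * D).
Proof.
move=> s hbe hc hcb hc2 hK hg hrho ht hs hs3 hbg hh hsK C v D.
have h14 : 0 <= 1 - 4 * s by lra.
have [k1 k2 k3 k4] := @key R _ _ _ _ _ _ _ hbe hc hcb hc2 hK hg hrho ht hs hs3 hbg hh hsK.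
rewrite /v vhat_real -/s //.
set A := (X in real_complex R X * v0).
set B := (X in real_complex R X * v1).
split; first by rewrite /D; apply: cmod_lin.
set E := expR _.
have -> : real_complex R A * v0 + real_complex R B * v1 - real_complex R E * (v0 + v1)
  = real_complex R (A - E) * v0 + real_complex R (B - E) * v1.
  by rewrite !rmorphB; ring.
by rewrite /D; apply: cmod_lin.
Qed.

End P.

Lemma powR_le01 (R : realType) (r x y : R) : 0 <= r <= 1 -> 0 < y -> y <= x ->
  powR r x <= powR r y.
Proof.
case/andP=> r0 r1 hy hyx.
have [->|rn0] := eqVneq r 0.
  by rewrite !powR0 //; apply/eqP => e; move: hy hyx; rewrite ?e; lra.
by apply: ger_powR => //; rewrite r1 andbT lt0r rn0.
Qed.

Lemma powR_le_q (R : realType) (r q e : R) : 0 <= r -> 0 < q -> 0 < e ->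
  r <= powR q (1 / e) -> powR r e <= q.
Proof.
move=> r0 q0 e0 hr.
have h := @ge0_ler_powR R e (ltW e0) r (powR q (1 / e)).
rewrite -powRrM mul1r mulVf ?gt_eqF // powRr1 ?(ltW q0) // in h.
apply: h => //; first by rewrite nnegrE powR_ge0.
by rewrite -[e^-1]mul1r.
Qed.

Theorem proposition3p1 (R : realType) (n : nat) (a b sigma : R)
  (hn : (1 <= n)%N) (ha : 0 < a) (hb : 0 < b)
  (hs0 : 0 < sigma) (hs1 : sigma != 1) :
  exists eps0 c C : R, [/\ 0 < eps0, 0 < c & 0 < C] /\
  forall (t : R) (xi : 'rV[R]_n) (v0h v1h : R[i]),
    0 <= t -> enorm xi <= eps0 ->
    let r := enorm xi in
    let v := vhat a b sigma t xi v0h v1h in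
    let D := cmod v0h + cmod v1h in
    (sigma < 1 ->
       cmod v <= C * expR (- c * powR r (2 * sigma) * t) * D /\
       cmod (v - (real_complex R (expR (- b * powR r (2 * sigma) * t))) * (v0h + v1h))%R
         <= C * (expR (- c * t)
                 + powR r (Num.min (2 - 2 * sigma) (2 * sigma))
                   * expR (- c * powR r (2 * sigma) * t)) * D) /\
    (1 < sigma ->
       cmod v <= C * expR (- c * r ^+ 2 * t) * D /\
       cmod (v - (real_complex R (expR (- a * r ^+ 2 * t))) * (v0h + v1h))%R
         <= C * (expR (- c * t)
                 + powR r (Num.min 2 (2 * sigma - 2))
                   * expR (- c * r ^+ 2 * t)) * D).
Proof.
have [hlt|hgt1] : sigma < 1 \/ 1 < sigma.
  by move: hs1; rewrite neq_lt => /orP[]; [left|right].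
- set q := 3 / (16 * (a + b)).
  have hab : 0 < a + b by lra.
  have hq : 0 < q by apply: divr_gt0 => //; lra.
  have hqab : (a + b) * q = 3/16 by rewrite /q; field; lra.
  set K := (a + b) + 2 * (a + b) ^+ 2.
  have hK : 0 <= K by rewrite /K; apply: addr_ge0; [lra | apply: mulr_ge0; [lra|apply: sqr_ge0]].
  have hKb : 0 <= 2 * K / b by apply: divr_ge0; [lra | apply: ltW].
  exists (Num.min 1 (powR q (1 / (2 * sigma)))), (Num.min (b / 2) (1 / 2)), (8 + 8 * K + 2 * K / b).
  split.
    split; [by rewrite lt_min ltr01 powR_gt0 | rewrite lt_min; apply/andP; split; lra | lra].
  move=> t xi v0 v1 ht hr r v D.
  split=> hs; last by move: (lt_trans hlt hs); rewrite ltxx.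
  have hr0 : 0 <= r by rewrite /r /enorm sqrtr_ge0.
  have hr1 : r <= 1 by move: hr; rewrite le_min => /andP[].
  have hrq : r <= powR q (1 / (2 * sigma)) by move: hr; rewrite le_min => /andP[].
  have hr01 : 0 <= r <= 1 by apply/andP.
  set c := Num.min (b / 2) (1 / 2).
  have hc0 : 0 < c by rewrite lt_min; apply/andP; split; lra.
  have hc1 : c <= b / 2 by rewrite ge_min lexx.
  have hc2 : c <= 1 / 2 by rewrite ge_min lexx orbT.
  set g := powR r (2 * sigma).
  set k := Num.min (2 - 2 * sigma) (2 * sigma).
  set rho := powR r k.
  have hs2 : 0 < 2 * sigma by lra.
  have hk : 0 < k by rewrite lt_min; apply/andP; split; lra.
  have hg0 : 0 <= g := powR_ge0 _ _.
  have hrho0 : 0 <= rho := powR_ge0 _ _.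
  have hgq : g <= q := @powR_le_q R _ _ _ hr0 hq hs2 hrq.
  have hr2g : r ^+ 2 <= g by rewrite -powR_mulrn //; apply: powR_le01 => //; lra.
  have hgrho : g <= rho by apply: powR_le01 => //; rewrite /k ge_min lexx orbT.
  have hP : r ^+ 2 = powR r (2 - 2 * sigma) * g.
    rewrite /g -powRD; first by rewrite subrK powR_mulrn.
    by rewrite subrK pnatr_eq0.
  have hPr : powR r (2 - 2 * sigma) <= rho.
    by apply: powR_le01 => //; rewrite /k ge_min lexx.
  have hsd : symb a b sigma r = a * r ^+ 2 + b * g by [].
  have f1 : a * r ^+ 2 <= a * g by apply: ler_wpM2l => //; lra.
  have fa2 : 0 <= a * r ^+ 2 by apply: mulr_ge0; [lra | apply: sqr_ge0].
  have fbg : 0 <= b * g by apply: mulr_ge0; [lra | ].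
  have f2 : (a + b) * g <= (a + b) * q by apply: ler_wpM2l => //; lra.
  have f3 : a * r ^+ 2 <= a * (rho * g).
    rewrite hP; apply: ler_wpM2l; [lra | exact: ler_wpM2r].
  have f4 : symb a b sigma r * symb a b sigma r <= ((a + b) * g) * ((a + b) * g).
    by apply: ler_pM; rewrite hsd; lra.
  have f5 : g * g <= rho * g by apply: ler_wpM2r.
  have f6 : (a + b) ^+ 2 * (g * g) <= (a + b) ^+ 2 * (rho * g).
    by apply: ler_wpM2l => //; apply: sqr_ge0.
  have f7 : 0 <= b * (rho * g) by apply: mulr_ge0; [lra | apply: mulr_ge0].
  have f8 : (a + b) * g <= (a + b) * rho by apply: ler_wpM2l => //; lra.
  have f9 : 0 <= (a + b) ^+ 2 * rho by apply: mulr_ge0 => //; apply: sqr_ge0.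
  have := @conclude R n a b sigma t xi v0 v1 b c K g rho hb hc0 hc1 hc2 hK hg0 hrho0 ht.
  apply; rewrite ?hsd.
  + lra.
  + lra.
  + lra.
  + rewrite /K -hsd expr2; lra.
  + rewrite /K; lra.
- set q := 3 / (16 * (a + b)).
  have hab : 0 < a + b by lra.
  have hq : 0 < q by apply: divr_gt0 => //; lra.
  have hqab : (a + b) * q = 3/16 by rewrite /q; field; lra.
  set K := (a + b) + 2 * (a + b) ^+ 2.
  have hK : 0 <= K by rewrite /K; apply: addr_ge0; [lra | apply: mulr_ge0; [lra|apply: sqr_ge0]].
  have hKb : 0 <= 2 * K / a by apply: divr_ge0; [lra | apply: ltW].
  exists (Num.min 1 (powR q (1 / 2))), (Num.min (a / 2) (1 / 2)), (8 + 8 * K + 2 * K / a).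
  split.
    split; [by rewrite lt_min ltr01 powR_gt0 | rewrite lt_min; apply/andP; split; lra | lra].
  move=> t xi v0 v1 ht hr r v D.
  split=> hs; first by move: (lt_trans hgt1 hs); rewrite ltxx.
  have hr0 : 0 <= r by rewrite /r /enorm sqrtr_ge0.
  have hr1 : r <= 1 by move: hr; rewrite le_min => /andP[].
  have hrq : r <= powR q (1 / 2) by move: hr; rewrite le_min => /andP[].
  have hr01 : 0 <= r <= 1 by apply/andP.
  set c := Num.min (a / 2) (1 / 2).
  have hc0 : 0 < c by rewrite lt_min; apply/andP; split; lra.
  have hc1 : c <= a / 2 by rewrite ge_min lexx.
  have hc2 : c <= 1 / 2 by rewrite ge_min lexx orbT.
  set g := r ^+ 2.
  set w := powR r (2 * sigma).
  set k := Num.min 2 (2 * sigma - 2).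
  set rho := powR r k.
  have h2 : (0 : R) < 2 by lra.
  have hk : 0 < k by rewrite lt_min; apply/andP; split; lra.
  have hg0 : 0 <= g by apply: sqr_ge0.
  have hw0 : 0 <= w := powR_ge0 _ _.
  have hrho0 : 0 <= rho := powR_ge0 _ _.
  have hgq : g <= q by rewrite /g -powR_mulrn //; exact: (@powR_le_q R _ _ _ hr0 hq h2 hrq).
  have hwg : w <= g by rewrite /g -powR_mulrn //; apply: powR_le01 => //; lra.
  have hgrho : g <= rho by rewrite /g -powR_mulrn //; apply: powR_le01 => //; rewrite /k ge_min lexx.
  have hP : w = powR r (2 * sigma - 2) * g.
    rewrite /g /w -powR_mulrn // -powRD; first by rewrite subrK.
    by rewrite subrK gt_eqF //; lra.
  have hPr : powR r (2 * sigma - 2) <= rho.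
    by apply: powR_le01 => //; rewrite /k ge_min lexx orbT.
  have hsd : symb a b sigma r = a * g + b * w by [].
  have f1 : b * w <= b * g by apply: ler_wpM2l => //; lra.
  have fa2 : 0 <= b * w by apply: mulr_ge0; [lra | ].
  have fbg : 0 <= a * g by apply: mulr_ge0; [lra | ].
  have f2 : (a + b) * g <= (a + b) * q by apply: ler_wpM2l => //; lra.
  have f3 : b * w <= b * (rho * g).
    rewrite hP; apply: ler_wpM2l; [lra | exact: ler_wpM2r].
  have f4 : symb a b sigma r * symb a b sigma r <= ((a + b) * g) * ((a + b) * g).
    by apply: ler_pM; rewrite hsd; lra.
  have f5 : g * g <= rho * g by apply: ler_wpM2r.
  have f6 : (a + b) ^+ 2 * (g * g) <= (a + b) ^+ 2 * (rho * g).
    by apply: ler_wpM2l => //; apply: sqr_ge0.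
  have f7 : 0 <= a * (rho * g) by apply: mulr_ge0; [lra | apply: mulr_ge0].
  have f8 : (a + b) * g <= (a + b) * rho by apply: ler_wpM2l => //; lra.
  have f9 : 0 <= (a + b) ^+ 2 * rho by apply: mulr_ge0 => //; apply: sqr_ge0.
  have := @conclude R n a b sigma t xi v0 v1 a c K g rho ha hc0 hc1 hc2 hK hg0 hrho0 ht.
  apply; rewrite ?hsd.
  + lra.
  + lra.
  + lra.
  + rewrite /K -hsd expr2; lra.
  + rewrite /K; lra.
Qed.
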